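(* Let $\xi$ be a probability measure on $\mathbb{Z}_+$ with $\xi(0)>0$, $\sum_kk\xi(k)=1$, whose support generates $\mathbb{Z}$. (i) For every $n\geq1$ with $\mathrm{GW}_\xi(\#t=n)>0$, the law $\mathrm{GW}^{(n)}_\xi=\mathrm{GW}_\xi(\cdot\mid\#t=n)$ on rooted unordered trees equals $\mathsf{Q}^q_n$, where $q_1((1))=1$ and for $n\geq2$ (with $\mathrm{GW}_\xi(\#t=n+1)>0$) and $\lambda=(\lambda_1,\dots,\lambda_p)\in\mathcal{P}_n$, $$q_n(\lambda)=\frac{p!}{\prod_{j\geq1}m_j(\lambda)!}\xi(p)\frac{\prod_{i=1}^p\mathrm{GW}_\xi(\#t=\lambda_i)}{\mathrm{GW}_\xi(\#t=n+1)}.$$ (ii) Let $X_1,X_2,\dots$ be i.i.d. with $\mathbb{P}(X_1=k)=\mathrm{GW}_\xi(\#t=k)$ and $\tau_p=X_1+\dots+X_p$. Then $q_n(p(\lambda)=p)=\xi(p)\mathbb{P}(\tau_p=n)/\mathbb{P}(\tau_1=n+1)$, and $q_n(\cdot\mid p(\lambda)=p)$ is the law of the non-increasing rearrangement of $(X_1,\dots,X_p)$ conditionally on $X_1+\dots+X_p=n$.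
   Context: $\mathrm{GW}_\xi$ is the Galton--Watson law on plane trees, $\mathrm{GW}_\xi(\{t\})=\prod_{u\in t}\xi(c_u(t))$ ($c_u$ the number of children), pushed forward to rooted unordered trees; $\#t$ is the number of vertices. $\mathcal{P}_n$ is the set of partitions of $n$, $p(\lambda)$ the number of parts and $m_j(\lambda)$ the number of parts equal to $j$. The laws $\mathsf{Q}^q_n$ on trees with $n$ vertices: $\mathsf{Q}^q_1$ is the law of the one-vertex tree; $\mathsf{Q}^q_{n+1}$ is the law of the tree whose root has as children the roots of independent trees $T^{(1)},\dots,T^{(p(\Lambda))}$ with laws $\mathsf{Q}^q_{\Lambda_i}$, where $\Lambda\sim q_n$. *)

(* Defs.v *)
From HB Require Import structures.
From mathcomp Require Import all_boot all_order all_algebra.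
From mathcomp Require Import all_classical all_reals all_analysis.
Set Implicit Arguments. Unset Strict Implicit. Unset Printing Implicit Defensive.
Import Order.TTheory GRing.Theory Num.Theory.

Inductive ptree := Node of seq ptree.

Fixpoint ptree_enc (t : ptree) : GenTree.tree nat :=
  let: Node cs := t in GenTree.Node 0 (map ptree_enc cs).
Fixpoint ptree_dec (t : GenTree.tree nat) : ptree :=
  match t with
  | GenTree.Leaf _ => Node [::]
  | GenTree.Node _ cs => Node (map ptree_dec cs)
  end.
Lemma ptree_encK : pcancel ptree_enc (fun x => Some (ptree_dec x)).
Proof.
rewrite /pcancel; fix IH 1; case=> cs /=; congr (Some (Node _)).
elim: cs => //= c cs IHcs; case: (IH c) => ->; by rewrite IHcs.
Qed.
HB.instance Definition _ := Countable.copy ptree (pcan_type ptree_encK).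

Definition children (t : ptree) : seq ptree := let: Node cs := t in cs.

Fixpoint tsize (t : ptree) : nat :=
  let: Node cs := t in (sumn (map tsize cs)).+1.

(* canonical representative of the rooted unordered tree underlying t:
   children canonicalized recursively, then sorted (pickle is injective) *)
Fixpoint canon (t : ptree) : ptree :=
  let: Node cs := t in
  Node (sort (fun a b => pickle a <= pickle b) (map canon cs)).

Fixpoint prodlists (T : Type) (As : seq (seq T)) : seq (seq T) :=
  match As with
  | [::] => [:: [::]]
  | A :: As' => [seq a :: s | a <- A, s <- prodlists As']
  end.

Fixpoint trees (m : nat) : seq ptree :=
  match m with
  | 0 => [::]
  | m'.+1 => [seq Node f | f <- flatten [seq prodlists (nseq k (trees m')) | k <- iota 0 m]]
  end.

Definition ptrees (n : nat) : seq ptree := undup [seq t <- trees n | tsize t == n].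

Definition utrees (n : nat) : seq ptree := undup (map canon (ptrees n)).

Definition nonincr (s : seq nat) : seq nat := sort (fun a b => b <= a) s.

Definition compositions (p n : nat) : seq (seq nat) :=
  [seq x <- prodlists (nseq p (iota 0 n.+1)) | sumn x == n].

Definition partitions (n : nat) : seq (seq nat) :=
  undup [seq l <- flatten [seq compositions p n | p <- iota 0 n.+1]
        | sorted (fun a b => b <= a) l & all (fun k => 0 < k) l].

Definition mult (j : nat) (l : seq nat) : nat := count_mem j l.

Section GW.
Variable R : realType.
Variable xi : nat -> R.

(* GW_xi({t}) = prod_{u in t} xi(c_u(t)) on plane trees *)
Fixpoint gw (t : ptree) : R :=
  let: Node cs := t in (xi (size cs) * \prod_(x <- map gw cs) x)%R.

Definition gw_size (n : nat) : R := (\sum_(t <- ptrees n) gw t)%R.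

Definition gw_unord (u : ptree) : R :=
  (\sum_(t <- ptrees (tsize u) | canon t == canon u) gw t)%R.

Definition gw_cond (n : nat) (u : ptree) : R :=
  if tsize u == n then (gw_unord u / gw_size n)%R else 0%R.

Definition q_formula (n : nat) (l : seq nat) : R :=
  ((size l)`!%:R / (\prod_(1 <= j < n.+1) (mult j l)`!)%:R * xi (size l)
   * (\prod_(k <- l) gw_size k) / gw_size n.+1)%R.

(* P(X_1 = k) = GW(#t = k), X_i i.i.d.;  P(tau_p = n) *)
Definition P_tau (p n : nat) : R :=
  (\sum_(x <- compositions p n) \prod_(k <- x) gw_size k)%R.

(* P(nonincreasing rearrangement of (X_1..X_p) = l, X_1+...+X_p = n) *)
Definition P_sorted_tau (p n : nat) (l : seq nat) : R :=
  (\sum_(x <- compositions p n | nonincr x == l) \prod_(k <- x) gw_size k)%R.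
End GW.

(* Qfuel R q fuel n u : value at (the class of) u of Q^q_n, valid when n <= fuel.
   Q^q_1 = point mass at the one-vertex tree;
   Q^q_{m+1}(u) = sum_{lambda in P_m} q_m(lambda) *
       P( root with children independent T^(i) ~ Q^q_{lambda_i} is isomorphic to u ). *)
Fixpoint Qfuel (R : realType) (q : nat -> seq nat -> R) (fuel n : nat) (u : ptree) : R :=
  match fuel with
  | 0 => 0%R
  | fuel'.+1 =>
    match n with
    | 0 => 0%R
    | 1 => if canon u == Node [::] then 1%R else 0%R
    | m.+1 =>
      (\sum_(l <- partitions m)
         q m l * \sum_(ts <- prodlists [seq utrees k | k <- l]
                       | canon (Node ts) == canon u)
                   \prod_(kt <- zip l ts) Qfuel q fuel' kt.1 kt.2)%R
    end
  end.

Definition Qlaw (R : realType) (q : nat -> seq nat -> R) (n : nat) (u : ptree) : R :=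
  Qfuel q n n u.

Definition support_generates_Z (R : realType) (xi : nat -> R) : Prop :=
  forall H : int -> Prop,
    H 0%Z -> (forall a b, H a -> H b -> H (a - b)%R) ->
    (forall k, xi k != 0%R -> H (Posz k)) -> forall z, H z.

(* Main.v *)
Require Import Defs.
From HB Require Import structures.
From mathcomp Require Import all_boot all_order all_algebra.
From mathcomp Require Import all_classical all_reals all_analysis.
From mathcomp Require Import ring.
Import Order.TTheory GRing.Theory Num.Theory.
Import numFieldNormedType.Exports.
Import Defs.

Set Implicit Arguments. Unset Strict Implicit. Unset Printing Implicit Defensive.

Section Gen.
Local Open Scope ring_scope.
Variable V : nmodType.

Lemma sum_pred1_seq (J : eqType) (B : seq J) (y : J) (G : J -> V) :
  uniq B -> \sum_(b <- B | y == b) G b = if y \in B then G y else 0.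
Proof.
elim: B => [|b B IH] /=; first by rewrite big_nil.
move=> /andP[bB uB]; rewrite big_cons IH // inE.
case: eqP => [->|_] /= //.
by rewrite (negPf bB) addr0.
Qed.

Lemma sum_partition (I J : eqType) (A : seq I) (B : seq J) (f : I -> J) (X : I -> V) :
  uniq B -> \sum_(b <- B) \sum_(a <- A | f a == b) X a = \sum_(a <- A | f a \in B) X a.
Proof.
move=> uB.
rewrite (eq_bigr (fun b => \sum_(a <- A) if f a == b then X a else 0)); last first.
  by move=> b _; rewrite big_mkcond.
rewrite exchange_big /= [RHS]big_mkcond; apply: eq_bigr => a _.
by rewrite -big_mkcond /= sum_pred1_seq.
Qed.
End Gen.

Lemma prodlists_cons (T : Type) (A : seq T) As :
  prodlists (A :: As) = [seq a :: s | a <- A, s <- prodlists As].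
Proof. by []. Qed.

Lemma mem_prodlists (T : eqType) (As : seq (seq T)) s :
  (s \in prodlists As) = (size s == size As) && all2 (fun a A => a \in A) s As.
Proof.
elim: As s => [|A As IH] [|a s] //=.
- by apply/allpairsP => -[[x y] [_ _ /=]].
apply/allpairsP/idP => [[[x y] [/= xA yAs [-> ->]]]|].
  by rewrite xA /= eqSS -IH.
rewrite eqSS => /and3P[e aA sAs]; exists (a, s) => //=.
by rewrite aA IH e sAs.
Qed.

Lemma prodlists_uniq (T : eqType) (As : seq (seq T)) :
  all uniq As -> uniq (prodlists As).
Proof.
elim: As => [|A As IH] //= /andP[uA uAs].
apply: allpairs_uniq => //; first exact: IH.
by move=> [x y] [x' y'] _ _ /= [-> ->].
Qed.

Section Big2.
Local Open Scope ring_scope.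
Variable R : comRingType.

Lemma sum_prodlists_cons (T : Type) (A : seq T) As (G : seq T -> R) :
  \sum_(s <- prodlists (A :: As)) G s = \sum_(a <- A) \sum_(s <- prodlists As) G (a :: s).
Proof. by rewrite prodlists_cons big_allpairs_dep. Qed.

Lemma sum_prodlists_cat (T : Type) (X Y : seq (seq T)) (G : seq T -> R) :
  \sum_(z <- prodlists (X ++ Y)) G z =
  \sum_(x <- prodlists X) \sum_(y <- prodlists Y) G (x ++ y).
Proof.
elim: X G => [|A X IH] G; first by rewrite /= big_cons big_nil addr0.
rewrite cat_cons !sum_prodlists_cons; apply: eq_bigr => a _.
by rewrite IH.
Qed.

Lemma sum_prodlists_perm (T : eqType) (Ls Ls' : seq (seq T)) (H : seq T -> R) :
  (forall s s', perm_eq s s' -> H s = H s') ->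
  perm_eq Ls' Ls ->
  \sum_(s <- prodlists Ls') H s = \sum_(s <- prodlists Ls) H s.
Proof.
elim: Ls Ls' H => [|L Ls IH] Ls' H Hsym.
  by move/perm_nilP => ->.
move=> pL.
have LLs' : L \in Ls' by rewrite (perm_mem pL) mem_head.
move: pL; case/splitPr: LLs' => Ls1 Ls2 pL.
have p12 : perm_eq (Ls1 ++ Ls2) Ls.
  have h := perm_catCA [:: L] Ls1 Ls2.
  by rewrite -(perm_cons L) h.
rewrite sum_prodlists_cat sum_prodlists_cons.
transitivity (\sum_(x <- prodlists Ls1) \sum_(a <- L)
   \sum_(y <- prodlists Ls2) H (a :: (x ++ y))).
  apply: eq_bigr => x _; rewrite sum_prodlists_cons; apply: eq_bigr => a _.
  by apply: eq_bigr => y _; apply: Hsym; rewrite -cat1s perm_catCA.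
rewrite exchange_big /=; apply: eq_bigr => a _.
rewrite -(IH (Ls1 ++ Ls2) (fun s => H (a :: s))) //; last first.
  by move=> s s' pss'; apply: Hsym; rewrite perm_cons.
by rewrite sum_prodlists_cat.
Qed.
End Big2.

Lemma ptree_ind' (P : ptree -> Prop) :
  (forall cs, (forall c, c \in cs -> P c) -> P (Node cs)) -> forall t, P t.
Proof.
move=> IH; fix F 1; case=> cs; apply: IH.
elim: cs => [|c cs IHcs] x; first (rewrite in_nil => h; discriminate h).
rewrite inE => /orP[/eqP->|h]; first exact: F.
exact: IHcs.
Qed.

Lemma size_le_sumn (cs : seq ptree) : size cs <= sumn (map tsize cs).
Proof. by elim: cs => //= -[cs0] cs IH; rewrite addSn ltnS (leq_trans IH (leq_addl _ _)). Qed.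

Lemma tsize_le_sumn (cs : seq ptree) c : c \in cs -> tsize c <= sumn (map tsize cs).
Proof.
elim: cs => //= c' cs IH; rewrite inE => /orP[/eqP->|/IH h]; first exact: leq_addr.
exact: leq_trans h (leq_addl _ _).
Qed.

Lemma all2_nseq (T : eqType) (s : seq T) (B : seq T) :
  all2 (fun a A => a \in A) s (nseq (size s) B) = all (mem B) s.
Proof. by elim: s => //= a s ->. Qed.

Lemma mem_trees m t : tsize t <= m -> t \in trees m.
Proof.
elim: m t => [|m IH] [cs] //; rewrite [tsize _]/= ltnS => hs.
change (Node cs \in [seq Node f | f <- flatten
  [seq prodlists (nseq k (trees m)) | k <- iota 0 m.+1]]).
apply/mapP; exists cs => //; apply/flattenP.
exists (prodlists (nseq (size cs) (trees m))).
  apply: (map_f (fun k => prodlists (nseq k (trees m)))).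
  by rewrite mem_iota /= add0n ltnS (leq_trans (size_le_sumn cs) hs).
rewrite mem_prodlists size_nseq eqxx /= all2_nseq; apply/allP => c cin.
by apply: IH; apply: leq_trans hs; apply: tsize_le_sumn.
Qed.

Lemma mem_ptrees n t : (t \in ptrees n) = (tsize t == n).
Proof.
rewrite /ptrees mem_undup mem_filter andb_idr // => /eqP e.
by apply: mem_trees; rewrite e.
Qed.

Lemma ptrees_uniq n : uniq (ptrees n).
Proof. exact: undup_uniq. Qed.

Lemma ptrees0 : ptrees 0 = [::].
Proof. by []. Qed.

Definition pl := fun a b : ptree => pickle a <= pickle b.

Lemma pl_total : total pl.
Proof. by move=> a b; exact: leq_total. Qed.
Lemma pl_trans : transitive pl.
Proof. by move=> a b c; exact: leq_trans. Qed.
Lemma pl_anti : antisymmetric pl.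
Proof. by move=> a b /anti_leq /(pcan_inj (@pickleK_inv _)). Qed.

Lemma canonE cs : canon (Node cs) = Node (sort pl (map canon cs)).
Proof. by []. Qed.

Lemma tsize_canon t : tsize (canon t) = tsize t.
Proof.
elim/ptree_ind': t => cs IH; rewrite canonE /=.
rewrite (perm_sumn (perm_map _ (permEl (perm_sort _ _)))) -map_comp.
by congr (_.+1); congr sumn; apply/eq_in_map => c /IH.
Qed.

Lemma sort_map_canon cs : (forall c, c \in cs -> canon (canon c) = canon c) ->
  map canon (sort pl (map canon cs)) = sort pl (map canon cs).
Proof.
move=> IH; rewrite -[RHS]map_id; apply/eq_in_map => y.
by rewrite mem_sort => /mapP[c cin ->]; apply: IH.
Qed.

Lemma canonK t : canon (canon t) = canon t.
Proof.
elim/ptree_ind': t => cs IH; rewrite canonE [LHS]canonE sort_map_canon //.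
by rewrite (sorted_sort pl_trans (sort_sorted pl_total _)).
Qed.

Lemma canon_perm cs cs' : perm_eq cs cs' -> canon (Node cs) = canon (Node cs').
Proof.
move=> p; rewrite !canonE; congr Node.
apply/(perm_sortP pl_total pl_trans pl_anti); exact: perm_map.
Qed.

Lemma canon_map cs : canon (Node (map canon cs)) = canon (Node cs).
Proof. by rewrite !canonE -map_comp; congr (Node (sort _ _)); apply: eq_map => c /=; rewrite canonK. Qed.

Lemma mem_utrees k u : u \in utrees k -> canon u = u /\ tsize u = k.
Proof.
rewrite /utrees mem_undup => /mapP[t]; rewrite mem_ptrees => /eqP <- ->.
by rewrite canonK tsize_canon.
Qed.

Lemma canon_utrees k a : a \in ptrees k -> canon a \in utrees k.
Proof. by move=> h; rewrite /utrees mem_undup; apply: map_f. Qed.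

Lemma utrees_uniq k : uniq (utrees k).
Proof. exact: undup_uniq. Qed.

Definition ge := fun a b : nat => b <= a.
Lemma ge_total : total ge. Proof. by move=> a b; rewrite /ge orbC leq_total. Qed.
Lemma ge_trans : transitive ge. Proof. by move=> a b c h1 h2; rewrite /ge (leq_trans h2 h1). Qed.
Lemma ge_anti : antisymmetric ge. Proof. by move=> a b /andP[h1 h2]; apply/anti_leq/andP. Qed.

Lemma mem_prodlists_nseq (T : eqType) p (B : seq T) x :
  (x \in prodlists (nseq p B)) = (size x == p) && all (mem B) x.
Proof.
rewrite mem_prodlists size_nseq; case: eqP => // <-.
by rewrite all2_nseq.
Qed.

Lemma leq_sumn_mem (x : seq nat) a : a \in x -> a <= sumn x.
Proof.
elim: x => //= b x IH; rewrite inE => /orP[/eqP->|/IH h]; first exact: leq_addr.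
exact: leq_trans h (leq_addl _ _).
Qed.

Lemma mem_compositions p n x :
  (x \in compositions p n) = (size x == p) && (sumn x == n).
Proof.
rewrite /compositions mem_filter mem_prodlists_nseq.
case: (size x == p); rewrite ?andbF ?andbT //.
case: eqP => [sx|]; last by rewrite andbF.
apply/allP => a ax; have := leq_sumn_mem ax; rewrite sx => h.
by change (a \in iota 0 n.+1); rewrite mem_iota add0n ltnS.
Qed.

Lemma compositions_uniq p n : uniq (compositions p n).
Proof.
apply: filter_uniq; apply: prodlists_uniq.
by apply/allP => B /nseqP[-> _]; exact: iota_uniq.
Qed.

Lemma size_le_sumn_pos (l : seq nat) : all (fun k => 0 < k) l -> size l <= sumn l.
Proof. by elim: l => //= a l IH /andP[a0 /IH h]; rewrite -add1n leq_add. Qed.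

Lemma mem_partitions n l :
  (l \in partitions n) = [&& sorted ge l, all (fun k => 0 < k) l & sumn l == n].
Proof.
rewrite /partitions mem_undup mem_filter.
apply/andP/idP => [[/andP[-> ->] /flattenP[C /mapP[p _ ->]]]|/and3P[so po se]].
  by rewrite mem_compositions => /andP[_ ->].
split; first by rewrite so po.
apply/flattenP; exists (compositions (size l) n).
  apply: (map_f (fun p => compositions p n)); rewrite mem_iota add0n ltnS -(eqP se); exact: size_le_sumn_pos.
by rewrite mem_compositions eqxx se.
Qed.

Lemma partitions_uniq n : uniq (partitions n).
Proof. exact: undup_uniq. Qed.

Lemma nonincr_perm (l x : seq nat) : sorted ge l -> (nonincr x == l) = perm_eq x l.
Proof.
move=> sl; apply/eqP/idP => [<-|p].
  by rewrite perm_sym; exact: (permEl (perm_sort _ _)).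
rewrite -(sorted_sort ge_trans sl); apply/(perm_sortP ge_total ge_trans ge_anti).
exact: p.
Qed.

Lemma sorted_nonincr x : sorted ge (nonincr x).
Proof. exact: (sort_sorted ge_total). Qed.

Lemma prod_count_rem (T : eqType) (A s : seq T) x :
  uniq A -> x \in A -> x \in s ->
  \prod_(y <- A) (count_mem y s)`! =
  (\prod_(y <- A) (count_mem y (rem x s))`!) * count_mem x s.
Proof.
move=> uA xA xs.
have cE y : count_mem y s = (x == y) + count_mem y (rem x s).
  by rewrite (permP (perm_to_rem xs)) /= eq_sym.
rewrite (bigD1_seq x) //= [X in _ = X * _](bigD1_seq x) //= cE eqxx add1n factS.
rewrite [RHS]mulnC [RHS]mulnA; congr (_ * _); apply: eq_bigr => y yx.
by rewrite cE eq_sym (negPf yx).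
Qed.

Lemma sum_count_undup (T : eqType) (s : seq T) :
  \sum_(x <- undup s) count_mem x s = size s.
Proof.
rewrite -[RHS](perm_size (perm_count_undup s)) size_flatten /shape -map_comp sumnE.
by rewrite big_map; apply: eq_bigr => x _ /=; rewrite size_nseq.
Qed.

Lemma perms_count (T : eqType) (A s : seq T) : uniq A -> {subset s <= A} ->
  size (permutations s) * \prod_(y <- A) (count_mem y s)`! = (size s)`!.
Proof.
move=> uA; move Dn: (size s) => n; elim: n s Dn => [|n IH] s Dn sA.
  move/size0nil: Dn => ->; rewrite big1 // => y _.
have s0 : 0 < size s by rewrite Dn.
rewrite (perm_size (permutationsE s0)) size_allpairs_dep sumnE big_map big_distrl /=.
rewrite factS -[n.+1]Dn -sum_count_undup big_distrl /=.
rewrite big_seq [RHS]big_seq; apply: eq_bigr => x; rewrite mem_undup => xs.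
rewrite (prod_count_rem uA (sA _ xs) xs) mulnA IH.
- by rewrite mulnC.
- by rewrite size_rem // Dn.
- by move=> y /mem_rem /sA.
Qed.

Section Gen2.
Local Open Scope ring_scope.
Variable R : comRingType.

Lemma fiber_sum (T U : eqType) (A : nat -> seq T) (B : nat -> seq U)
  (f : T -> U) (h : U -> U) (w : T -> R) (l : seq nat) (g : seq U -> R) :
  (forall k a, a \in A k -> f a \in B k) -> (forall k, uniq (B k)) ->
  (forall k b, b \in B k -> h b = b) ->
  \sum_(ts <- prodlists (map B l)) g ts *
     \prod_(kt <- zip l ts) \sum_(a <- A kt.1 | f a == h kt.2) w a =
  \sum_(cs <- prodlists (map A l)) g (map f cs) * \prod_(c <- cs) w c.
Proof.
move=> fAB uB hB; elim: l g => [|k l IH] g.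
  rewrite (_ : prodlists (map B [::]) = [:: [::]]) // (_ : prodlists (map A [::]) = [:: [::]]) //.
  by rewrite !big_cons !big_nil !addr0.
rewrite map_cons !sum_prodlists_cons.
transitivity (\sum_(b <- B k) (\sum_(a <- A k | f a == b) w a) *
   \sum_(cs <- prodlists (map A l)) g (b :: map f cs) * \prod_(c <- cs) w c).
  rewrite big_seq [RHS]big_seq; apply: eq_bigr => b bB.
  rewrite -(IH (fun s => g (b :: s))) mulr_sumr; apply: eq_bigr => s _.
  by rewrite /= big_cons /= (hB _ _ bB) mulrCA.
transitivity (\sum_(b <- B k) \sum_(a <- A k | f a == b) (w a *
   \sum_(cs <- prodlists (map A l)) g (f a :: map f cs) * \prod_(c <- cs) w c)).
  apply: eq_bigr => b _; rewrite mulr_suml; apply: eq_bigr => a /eqP -> //.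
rewrite sum_partition //= -big_filter.
rewrite (_ : [seq a <- A k | f a \in B k] = A k); last first.
  by apply/all_filterP/allP => a /fAB.
apply: eq_bigr => a _; rewrite mulr_sumr; apply: eq_bigr => cs _.
by rewrite big_cons /= mulrCA.
Qed.

Lemma prod_zip (a : nat -> R) (b : nat * ptree -> R) (l : seq nat) (ts : seq ptree) :
  size ts = size l ->
  \prod_(k <- l) a k * \prod_(kt <- zip l ts) b kt =
  \prod_(kt <- zip l ts) (a kt.1 * b kt).
Proof.
elim: l ts => [|k l IH] [|t ts] //=; first by rewrite !big_nil mulr1.
move=> [/IH e]; rewrite !big_cons -e /=; rewrite -!mulrA; congr (_ * _).
by rewrite mulrCA.
Qed.

Lemma sum_const_seq (T : Type) (r : seq T) (c : R) :
  \sum_(i <- r) c = (size r)%:R * c.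
Proof. by elim: r => [|x r IH]; rewrite ?big_nil ?mul0r // big_cons IH /= mulrSr mulrDl mul1r addrC. Qed.
End Gen2.

Lemma size_ptrees_eq (cs : seq ptree) (k : seq nat) :
  (size cs == size (map ptrees k)) && all2 (fun a A => a \in A) cs (map ptrees k)
  = (map tsize cs == k).
Proof.
elim: cs k => [|c cs IH] [|k ks] //=.
by rewrite eqSS mem_ptrees eqseq_cons andbCA IH.
Qed.

Lemma Node_inj : injective Node. Proof. by move=> a b [->]. Qed.

Section Decomp.
Local Open Scope ring_scope.
Variable R : realType.

Definition sz (t : ptree) := map tsize (children t).

Lemma decomp (F : ptree -> R) m :
  \sum_(t <- ptrees m.+1) F t =
  \sum_(l <- partitions m) \sum_(k <- permutations l)
     \sum_(cs <- prodlists (map ptrees k)) F (Node cs).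
Proof.
transitivity (\sum_(l <- partitions m) \sum_(t <- ptrees m.+1 | nonincr (sz t) == l) F t).
  rewrite sum_partition ?partitions_uniq // [RHS]big_seq_cond [LHS]big_seq.
  apply: eq_bigl => -[cs]; rewrite mem_ptrees; case: eqP => //= [[e]].
  rewrite mem_partitions sorted_nonincr /= /sz /=.
  rewrite (perm_all _ (permEl (perm_sort _ _))) (perm_sumn (permEl (perm_sort _ _))) e eqxx andbT.
  by apply/esym/allP => k /mapP[[c] _ ->].
rewrite big_seq [RHS]big_seq; apply: eq_bigr => l.
rewrite mem_partitions => /and3P[sl pl sm].
rewrite -big_filter.
transitivity (\sum_(t <- [seq t <- ptrees m.+1 | nonincr (sz t) == l] | sz t \in permutations l) F t).
  rewrite big_seq_cond [RHS]big_seq_cond; apply: eq_bigl => t.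
  rewrite mem_filter mem_permutations -(nonincr_perm _ sl).
  by case: (nonincr (sz t) == l); rewrite ?andbF.
rewrite -sum_partition ?permutations_uniq //.
rewrite big_seq [RHS]big_seq; apply: eq_bigr => k; rewrite mem_permutations => pk.
rewrite -big_filter -[RHS](big_map Node xpredT).
apply: perm_big; apply: uniq_perm.
- by do 2 apply: filter_uniq; exact: ptrees_uniq.
- rewrite (map_inj_uniq Node_inj); apply: prodlists_uniq.
  by apply/allP => B /mapP[j _ ->]; exact: ptrees_uniq.
case=> cs; rewrite (mem_map Node_inj) mem_prodlists size_ptrees_eq !mem_filter.
rewrite mem_ptrees /sz /= -(nonincr_perm _ sl) in pk *.
case: eqP => //= e; rewrite e (eqP pk) eqxx /=.
have := perm_sumn (permEl (perm_sort (fun a b : nat => (b <= a)%N) k)).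
move=> h; rewrite -h -[sort _ k]/(nonincr k) (eqP pk) (eqP sm); exact: eqxx.
Qed.
End Decomp.

Lemma p1 : ptrees 1 = [:: Node [::]]. Proof. by []. Qed.
Lemma p2 : ptrees 2 = [:: Node [:: Node [::]]]. Proof. by []. Qed.
Lemma pa1 : partitions 1 = [:: [:: 1]]. Proof. by []. Qed.

Section GWP.
Local Open Scope ring_scope.
Variable R : realType.
Variable xi : nat -> R.
Hypothesis xi_ge0 : forall k, 0 <= xi k.

Lemma gwE cs : gw xi (Node cs) = xi (size cs) * \prod_(c <- cs) gw xi c.
Proof. by rewrite /= big_map. Qed.

Lemma gw_ge0 t : 0 <= gw xi t.
Proof.
elim/ptree_ind': t => cs IH; rewrite gwE mulr_ge0 //.
by rewrite big_seq prodr_ge0 // => c /IH.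
Qed.

Lemma gw_size_ge0 k : 0 <= gw_size xi k.
Proof. by rewrite sumr_ge0 // => t _; exact: gw_ge0. Qed.

Lemma sum_filter_le (T : Type) (r : seq T) (P : pred T) (F : T -> R) :
  (forall t, 0 <= F t) -> \sum_(t <- r | P t) F t <= \sum_(t <- r) F t.
Proof.
move=> F0; rewrite [X in _ <= X](bigID P) /= lerDl sumr_ge0 // => t _; exact: F0.
Qed.

Definition Gp k u := \sum_(t <- ptrees k | canon t == canon u) gw xi t.

Lemma Gp_cond k u : Gp k u = if tsize u == k then gw_unord xi u else 0.
Proof.
rewrite /Gp /gw_unord; case: eqP => [<- //|ne].
rewrite big_seq_cond big_pred0 // => t; rewrite mem_ptrees.
apply/negP => /andP[/eqP st /eqP ct]; apply: ne.
by rewrite -tsize_canon -ct tsize_canon.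
Qed.

Lemma Gp0 k u : gw_size xi k = 0 -> Gp k u = 0.
Proof.
move=> G0; apply/eqP; rewrite eq_le -{1}G0 sum_filter_le ?sumr_ge0 //.
- by move=> t _; exact: gw_ge0.
- exact: gw_ge0.
Qed.

Definition Hf u cs := if canon (Node cs) == canon u then gw xi (Node cs) else 0.

Lemma Hf_sym u cs cs' : perm_eq cs cs' -> Hf u cs = Hf u cs'.
Proof.
move=> p; rewrite /Hf (canon_perm p) !gwE (perm_size p) (perm_big _ p) //.
Qed.

Lemma gw_size1 : gw_size xi 1 = xi 0.
Proof. by rewrite /gw_size p1 big_seq1 gwE big_nil mulr1. Qed.

Lemma gw_size2 : gw_size xi 2 = xi 1 * xi 0.
Proof. by rewrite /gw_size p2 big_seq1 gwE big_seq1 gwE big_nil mulr1. Qed.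

Lemma count_partition m l : l \in partitions m ->
  (size l)`!%:R / (\prod_(1 <= j < m.+1) (mult j l)`!)%:R = (size (permutations l))%:R :> R.
Proof.
rewrite mem_partitions => /and3P[_ pl sm].
have E := @perms_count _ (index_iota 1 m.+1) l (iota_uniq _ _).
rewrite /mult -E.
- rewrite natrM mulfK // pnatr_eq0 -lt0n; apply: prodn_gt0 => j; exact: fact_gt0.
move=> k kl; rewrite mem_index_iota (allP pl k kl) /= ltnS -(eqP sm).
exact: leq_sumn_mem.
Qed.

Lemma gw_q_formula m l : l \in partitions m -> gw_size xi m.+1 != 0 ->
  gw_size xi m.+1 * q_formula xi m l =
  (size (permutations l))%:R * xi (size l) * \prod_(k <- l) gw_size xi k.
Proof.
move=> lP G0; rewrite /q_formula (count_partition lP) mulrC divfK //.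
Qed.
End GWP.

Section Main.
Local Open Scope ring_scope.
Variable R : realType.
Variable xi : nat -> R.
Hypothesis xi_ge0 : forall k, 0 <= xi k.
Variable q : nat -> seq nat -> R.
Hypothesis hq : forall m, (1 <= m)%N -> 0 < gw_size xi m.+1 ->
  forall l, l \in partitions m -> q m l = q_formula xi m l.

Lemma QfuelE f m u : Qfuel q f.+1 m.+2 u =
  \sum_(l <- partitions m.+1) q m.+1 l *
    \sum_(ts <- prodlists [seq utrees k | k <- l] | canon (Node ts) == canon u)
       \prod_(kt <- zip l ts) Qfuel q f kt.1 kt.2.
Proof. by []. Qed.

Lemma Qmain f k u : (1 <= k <= f)%N -> gw_size xi k * Qfuel q f k u = Gp xi k u.
Proof.
elim: f k u => [|f IH] k u; first by case: k.
case: k => [|[|m]] // hk.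
  rewrite gw_size1 /Gp p1 big_cons big_nil /= addr0 eq_sym.
  by case: (Node [::] == canon u); rewrite ?mulr1 ?mulr0 // big_nil mulr1.
have [G0|Gpos] : gw_size xi m.+2 = 0 \/ 0 < gw_size xi m.+2.
  by case: (ltrgt0P (gw_size xi m.+2)) => [|h|]; [right|have := gw_size_ge0 xi_ge0 m.+2; rewrite leNgt h|left].
  by rewrite G0 mul0r Gp0.
have G0 : gw_size xi m.+2 != 0 by rewrite gt_eqF.
rewrite QfuelE mulr_sumr.
transitivity (\sum_(l <- partitions m.+1) (size (permutations l))%:R *
   \sum_(cs <- prodlists (map ptrees l)) Hf xi u cs).
  rewrite big_seq [RHS]big_seq; apply: eq_bigr => l lP.
  rewrite mulrA hq // gw_q_formula // -!mulrA; congr (_ * _).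
  transitivity (\sum_(cs <- prodlists (map ptrees l))
     (if canon (Node (map canon cs)) == canon u then xi (size (map canon cs)) else 0)
      * \prod_(c <- cs) gw xi c); last first.
    apply: eq_bigr => cs _; rewrite canon_map size_map /Hf gwE.
    by case: ifP; rewrite ?mul0r.
  rewrite -(@fiber_sum _ _ _ ptrees utrees canon canon (gw xi) l
     (fun ts => if canon (Node ts) == canon u then xi (size ts) else 0)); last first.
  - by move=> j b /mem_utrees [].
  - exact: utrees_uniq.
  - exact: canon_utrees.
  rewrite !mulr_sumr [LHS]big_mkcond [LHS]big_seq [RHS]big_seq; apply: eq_bigr => ts tsP.
  have sts : size ts = size l.
    by move: tsP; rewrite mem_prodlists size_map => /andP[/eqP].
  case: ifP => _; last by rewrite mul0r.
  rewrite prod_zip // sts; congr (_ * _).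
  rewrite big_seq [RHS]big_seq; apply: eq_bigr => kt ktin; rewrite IH //.
  have := map_f (fun p => p.1) ktin; rewrite -/(unzip1 _) unzip1_zip ?sts // => kl.
  move: lP; rewrite mem_partitions => /and3P[_ pl sm].
  rewrite (allP pl _ kl) /=; apply: leq_trans (leq_sumn_mem kl) _.
  by rewrite (eqP sm).
rewrite /Gp [RHS]big_mkcond (decomp (fun t => if canon t == canon u then gw xi t else 0) m.+1).
apply: eq_bigr => l _.
transitivity (\sum_(k <- permutations l) \sum_(cs <- prodlists [seq ptrees i | i <- l]) Hf xi u cs).
  by rewrite sum_const_seq.
rewrite big_seq [RHS]big_seq; apply: eq_bigr => k; rewrite mem_permutations => pk.
symmetry; apply: sum_prodlists_perm; last exact: perm_map.
exact: Hf_sym.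
Qed.
End Main.

Lemma comp_perms p n l : l \in partitions n -> size l = p ->
  perm_eq [seq x <- compositions p n | nonincr x == l] (permutations l).
Proof.
rewrite mem_partitions => /and3P[sl _ sm] sp.
apply: uniq_perm; [exact/filter_uniq/compositions_uniq | exact: permutations_uniq|].
move=> x; rewrite mem_filter mem_permutations (nonincr_perm _ sl) mem_compositions.
case px: (perm_eq x l) => //=.
by rewrite (perm_size px) sp eqxx (perm_sumn px).
Qed.

Section Part2.
Local Open Scope ring_scope.
Variable R : realType.
Variable xi : nat -> R.

Lemma gw_size0 : gw_size xi 0 = 0.
Proof. by rewrite /gw_size ptrees0 big_nil. Qed.

Lemma Psorted p n l : l \in partitions n -> size l = p ->
  P_sorted_tau xi p n l = (size (permutations l))%:R * \prod_(k <- l) gw_size xi k.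
Proof.
move=> lP sp; rewrite /P_sorted_tau.
rewrite (_ : \sum_(x <- compositions p n | nonincr x == l) \prod_(k <- x) gw_size xi k =
  \sum_(x <- [seq x <- compositions p n | nonincr x == l]) \prod_(k <- x) gw_size xi k);
  last by rewrite big_filter.
rewrite (perm_big _ (comp_perms lP sp)).
rewrite -sum_const_seq big_seq [RHS]big_seq; apply: eq_bigr => x.
by rewrite mem_permutations => px; apply: perm_big.
Qed.

Lemma Psorted0 p n l : size l != p -> P_sorted_tau xi p n l = 0.
Proof.
move=> sp; rewrite /P_sorted_tau big_seq_cond big_pred0 // => x.
rewrite mem_compositions; apply/negP => /andP[/andP[/eqP sx _] /eqP e].
move: sp; rewrite -e -sx /nonincr size_sort eqxx //.
Qed.

Lemma Ptau p n : P_tau xi p n =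
  \sum_(l <- partitions n | size l == p) (size (permutations l))%:R * \prod_(k <- l) gw_size xi k.
Proof.
rewrite /P_tau (bigID (fun x => nonincr x \in [seq l <- partitions n | size l == p])) /=.
rewrite [X in _ + X]big_seq_cond [X in _ + X]big1 ?addr0; last first.
  move=> x /andP[]; rewrite mem_compositions => /andP[/eqP sx /eqP se] nP.
  have x0 : 0%N \in x.
    apply/negPn/negP => x0; move: nP; rewrite mem_filter mem_partitions.
    rewrite sorted_nonincr /nonincr size_sort sx eqxx.
    rewrite (perm_all _ (permEl (perm_sort _ _))) (perm_sumn (permEl (perm_sort _ _))) se eqxx /=.
    rewrite andbT => /negP; apply; apply/allP => k kx; rewrite lt0n.
    by apply/negP => /eqP k0; rewrite -k0 kx in x0.
  by rewrite (big_rem _ x0) /= gw_size0 mul0r.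
rewrite -sum_partition; last exact/filter_uniq/partitions_uniq.
rewrite big_filter big_seq_cond [RHS]big_seq_cond; apply: eq_bigr => l /andP[lP sp].
by rewrite -(Psorted lP (eqP sp)).
Qed.

Lemma Ptau1 N : P_tau xi 1 N = gw_size xi N.
Proof.
rewrite /P_tau /compositions big_filter big_mkcond (_ : nseq 1 _ = [:: iota 0 N.+1]) // sum_prodlists_cons.
transitivity (\sum_(a <- iota 0 N.+1 | N == a) gw_size xi a).
  rewrite [RHS]big_mkcond; apply: eq_bigr => a _.
  rewrite (_ : prodlists [::] = [:: [::]]) // big_seq1 /= addn0 eq_sym.
  by case: (N == a); rewrite // big_seq1.
by rewrite sum_pred1_seq ?iota_uniq // mem_iota /= add0n ltnSn.
Qed.
End Part2.

Unset Implicit Arguments.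

Lemma hq_all (R : realType) (xi : nat -> R) (q : nat -> seq nat -> R) :
  q 1 [:: 1] = 1%R ->
  (forall n, 2 <= n -> (0 < gw_size xi n.+1)%R ->
     forall l, l \in partitions n -> q n l = q_formula xi n l) ->
  forall m, 1 <= m -> (0 < gw_size xi m.+1)%R ->
     forall l, l \in partitions m -> q m l = q_formula xi m l.
Proof.
move=> h1 h m; case: m => [|[|m]] // _ G0; last exact: h.
move=> l; rewrite pa1 inE => /eqP ->; rewrite h1 /q_formula.
rewrite big_nat1 big_seq1 gw_size1 gw_size2 /= mul1r.
rewrite (_ : (1 + 0)`!%:R = 1 :> R)%R // invr1 mul1r mulfV // -gw_size2 gt_eqF //.
Qed.

Theorem proposition14 (R : realType) (xi : nat -> R) (q : nat -> seq nat -> R) :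
  (forall k, (0 <= xi k)%R) ->
  ((fun N : nat => \sum_(k < N) xi k)%R @ \oo --> (1%R : R))%classic ->
  ((fun N : nat => \sum_(k < N) (k%:R * xi k))%R @ \oo --> (1%R : R))%classic ->
  (0 < xi 0)%R ->
  support_generates_Z xi ->
  q 1 [:: 1] = 1%R ->
  (forall n, 2 <= n -> (0 < gw_size xi n.+1)%R ->
     forall l, l \in partitions n -> q n l = q_formula xi n l) ->
  (* (i) *)
  (forall n, 1 <= n -> (0 < gw_size xi n)%R ->
     forall u, gw_cond xi n u = Qlaw q n u)
  /\
  (* (ii) *)
  (forall n, 1 <= n -> (0 < gw_size xi n.+1)%R ->
     forall p,
       (\sum_(l <- partitions n | size l == p) q n l)%R
         = (xi p * P_tau xi p n / P_tau xi 1 n.+1)%R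
       /\
       ((0 < \sum_(l <- partitions n | size l == p) q n l)%R ->
        forall l, l \in partitions n ->
          ((if size l == p then q n l else 0)
             / \sum_(l' <- partitions n | size l' == p) q n l')%R
          = (P_sorted_tau xi p n l / P_tau xi p n)%R)).
Proof.
move=> xi0 _ _ _ _ h1 h.
have hq := @hq_all R xi q h1 h.
split.
  move=> n n1 Gp0 u.
  have := @Qmain R xi xi0 q hq n n u.
  rewrite n1 leqnn => /(_ isT) E.
  rewrite /Qlaw /gw_cond.
  transitivity (Gp xi n u / gw_size xi n)%R.
    by rewrite Gp_cond; case: ifP; rewrite ?mul0r.
  by rewrite -E mulrAC divff ?mul1r // gt_eqF.
move=> n n1 G0 p.
have qE l : l \in partitions n -> q n l =
   ((size (permutations l))%:R * xi (size l) * \prod_(k <- l) gw_size xi k / gw_size xi n.+1)%R.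
  move=> lP; rewrite hq // -(gw_q_formula lP) ?gt_eqF //.
  by rewrite mulrAC divff ?mul1r // gt_eqF.
have SE : (\sum_(l <- partitions n | size l == p) q n l =
    xi p * P_tau xi p n / P_tau xi 1 n.+1)%R.
  rewrite Ptau1 Ptau mulr_sumr mulr_suml big_seq_cond [RHS]big_seq_cond.
  apply: eq_bigr => l /andP[lP /eqP sp]; rewrite qE // sp.
  by ring.
split => // Spos l lP.
rewrite SE in Spos *.
case: eqP => sp; last by rewrite Psorted0 ?mul0r //; apply/eqP.
rewrite Psorted // qE // sp.
have : (xi p * P_tau xi p n != 0)%R.
  apply: contraTneq Spos => ->; by rewrite mul0r ltxx.
rewrite mulf_eq0 negb_or => /andP[x0 P0].
have G0' : (P_tau xi 1 n.+1 != 0)%R by rewrite Ptau1 gt_eqF.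
rewrite Ptau1 in G0' *.
field.
by rewrite x0 P0 G0'.
Qed.
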